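(* Let $\mathcal G$ be a class of topological groups. A paratopological group whose underlying topological space is a $k_\omega$-space is $\mathcal G$-separated if and only if it is $\mathcal G$-regular.
   Context: All topological spaces are Hausdorff. A paratopological group is a group with a Hausdorff topology making multiplication $G\times G\to G$ continuous (inversion need not be continuous); a topological group is one in which inversion is also continuous. A topological space $X$ is a $k_\omega$-space if there is a countable cover $\mathcal K$ of $X$ by compact subsets such that a set $U\subset X$ is open if and only if $U\cap K$ is open in $K$ for every $K\in\mathcal K$. A continuous map $h:X\to Y$ is regular if for each $x\in X$ and each neighborhood $U$ of $x$ there is a closed set $F\subset Y$ such that $h^{-1}(F)$ is a closed neighborhood of $x$ with $h^{-1}(F)\subset U$. For a class $\mathcal G$ of topological groups, a paratopological group $G$ is $\mathcal G$-separated if there is a continuous bijective homomorphism $h:G\to H$ onto a topological group $H\in\mathcal G$, and $\mathcal G$-regular if there is a regular continuous homomorphism $h:G\to H$ onto a topological group $H\in\mathcal G$. *)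

(* Defs.v *)
From mathcomp Require Import all_boot all_order.
From mathcomp Require Import all_classical all_reals all_analysis.
Set Implicit Arguments. Unset Strict Implicit. Unset Printing Implicit Defensive.
Local Open Scope classical_set_scope.

Record group_on (T : Type) := GroupOn {
  gmul : T -> T -> T;
  gone : T;
  ginv : T -> T;
  gmulA : forall x y z, gmul x (gmul y z) = gmul (gmul x y) z;
  gmul1 : forall x, gmul gone x = x;
  gmulV : forall x, gmul (ginv x) x = gone
}.

Record ParaTopGroup := ParaTopGroupPack {
  ptg_sort : topologicalType;
  ptg_grp : group_on ptg_sort;
  ptg_hausdorff : hausdorff_space ptg_sort;
  ptg_mul_cont : continuous (fun p : ptg_sort * ptg_sort => gmul ptg_grp p.1 p.2)
}.

Record TopGroup := TopGroupPack {
  tg_sort : topologicalType;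
  tg_grp : group_on tg_sort;
  tg_hausdorff : hausdorff_space tg_sort;
  tg_mul_cont : continuous (fun p : tg_sort * tg_sort => gmul tg_grp p.1 p.2);
  tg_inv_cont : continuous (ginv tg_grp)
}.

Definition TopGroupClass := TopGroup -> Prop.

(* Countable covers are indexed by nat (a nonempty finite cover can be repeated). *)
Definition k_omega_space (X : topologicalType) : Prop :=
  exists K : nat -> set X,
    (forall n, compact (K n)) /\
    (\bigcup_n K n = [set: X]) /\
    (forall U : set X,
        open U <-> (forall n, exists V : set X, open V /\ U `&` K n = V `&` K n)).

Definition regular_map (X Y : topologicalType) (h : X -> Y) : Prop :=
  continuous h /\
  forall (x : X) (U : set X), nbhs x U ->
    exists F : set Y, closed F /\ closed (h @^-1` F) /\ nbhs x (h @^-1` F)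
                      /\ h @^-1` F `<=` U.

Definition is_hom (G : ParaTopGroup) (H : TopGroup) (h : ptg_sort G -> tg_sort H) :=
  forall x y, h (gmul (ptg_grp G) x y) = gmul (tg_grp H) (h x) (h y).

Definition separated_by (C : TopGroupClass) (G : ParaTopGroup) : Prop :=
  exists H : TopGroup, C H /\
    exists h : ptg_sort G -> tg_sort H,
      is_hom h /\ continuous h /\ bijective h.

Definition regular_by (C : TopGroupClass) (G : ParaTopGroup) : Prop :=
  exists H : TopGroup, C H /\
    exists h : ptg_sort G -> tg_sort H,
      is_hom h /\ regular_map h /\ (forall y, exists x, h x = y).

(* Main.v *)
Require Import Defs.
From mathcomp Require Import all_boot all_order.
From mathcomp Require Import all_classical all_reals all_analysis.
Set Implicit Arguments. Unset Strict Implicit. Unset Printing Implicit Defensive.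
Local Open Scope classical_set_scope.

Section GroupAlg.
Variables (T : Type) (g : group_on T).
Local Notation m := (gmul g).
Local Notation i := (ginv g).
Local Notation e := (gone g).
Lemma gmulVr x : m x (i x) = e.
Proof.
have h1 : m (i (i x)) (i x) = e by rewrite gmulV.
rewrite -[m x (i x)](gmul1 g) -{1}h1 -gmulA [m (i x) (m x _)]gmulA gmulV (gmul1 g) h1 //.
Qed.
Lemma gmul1r x : m x e = x.
Proof. by rewrite -(gmulV g x) gmulA gmulVr (gmul1 g). Qed.
Lemma gcancel a b c : m a b = m a c -> b = c.
Proof. by move=> h; rewrite -(gmul1 g b) -(gmul1 g c) -(gmulV g a) -!gmulA h. Qed.
End GroupAlg.

Lemma tg_regular (H : TopGroup) (y : tg_sort H) (O : set (tg_sort H)) :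
  nbhs y O -> exists P, open P /\ P y /\ closure P `<=` O.
Proof.
move=> nO.
pose m := gmul (tg_grp H); pose i := ginv (tg_grp H).
have ey : m y (m (i y) y) = y by rewrite /m /i (gmulA (tg_grp H)) gmulVr gmul1.
have c2 : (fun p : tg_sort H * tg_sort H => m p.1 (m (i p.2) y)) @ nbhs (y, y) --> m y (m (i y) y).
  apply: (@continuous2_cvg _ _ _ _ _ _ fst (fun p => m (i p.2) y) m).
  - have hh := @tg_mul_cont H (y, m (i y) y). exact hh.
  - exact: cvg_fst.
  apply: (@continuous2_cvg _ _ _ _ _ _ (fun p => i p.2) (fun=> y) m).
  - exact (@tg_mul_cont H (i y, y)).
  - apply: (cvg_comp _ _ cvg_snd); exact: tg_inv_cont.
  - exact: cvg_cst.
rewrite ey in c2.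
have := c2 O nO.
case=> [[A B] /= [nA nB] sAB].
exists (A `&` B)°; split; first exact: open_interior.
split; first by apply: nbhs_singleton; apply: nbhs_interior; apply: filterI.
move=> z zcl.
have c3 : (fun w => m y (m (i z) w)) @ nbhs z --> m y (m (i z) z).
  apply: (@continuous2_cvg _ _ _ _ _ _ (fun=> y) (fun w => m (i z) w) m).
  - exact (@tg_mul_cont H (y, m (i z) z)).
  - exact: cvg_cst.
  apply: (@continuous2_cvg _ _ _ _ _ _ (fun=> i z) id m).
  - exact (@tg_mul_cont H (i z, z)).
  - exact: cvg_cst.
  - exact: cvg_id.
have ez : m y (m (i z) z) = y by rewrite /m /i gmulV gmul1r.
rewrite ez in c3.
have nS : nbhs z ((fun w => m y (m (i z) w)) @^-1` (A `&` B)) by apply: c3; apply: filterI.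
have [w [/interior_subset [wA wB] wS]] := zcl _ nS.
have hz : m w (m (i (m y (m (i z) w))) y) = z.
  have h1 : m (i (m y (m (i z) w))) y = m (i w) z.
    apply: (@gcancel _ (tg_grp H) (m y (m (i z) w))).
    rewrite /m /i (gmulA (tg_grp H)) gmulVr (gmul1 (tg_grp H)).
    rewrite -!(gmulA (tg_grp H)) [gmul _ w (gmul _ _ _)](gmulA (tg_grp H)) gmulVr (gmul1 (tg_grp H)).
    by rewrite gmulV gmul1r.
  by rewrite h1 /m /i (gmulA (tg_grp H)) gmulVr (gmul1 (tg_grp H)).
have := sAB (w, m y (m (i z) w)); rewrite /= hz; apply; split => //; by case: wS.
Qed.

Lemma tg_compact_sep (H : TopGroup) (K O : set (tg_sort H)) :
  compact K -> open O -> K `<=` O ->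
  exists P, open P /\ K `<=` P /\ closure P `<=` O.
Proof.
move=> cK oO KO.
pose Gs := [set P : set (tg_sort H) | open P /\ closure P `<=` O].
apply: contrapT => nex.
have ne : forall P, Gs P -> K `\` P !=set0.
  move=> P [oP cP]; apply/set0P/eqP => h; apply: nex; exists P; split => //.
  split => // k Kk; apply: contrapT => nP.
  have : (K `\` P) k by [].
  by rewrite h.
have FF : Filter (filter_from Gs (fun P => K `\` P)).
  apply: filter_from_filter.
    exists set0; split; first exact: open0.
    by rewrite closure0.
  move=> P Q [oP cP] [oQ cQ]; exists (P `|` Q).
    split; first exact: openU.
    by rewrite closureU => x [/cP|/cQ].
  by move=> x [Kx nPQ]; split; split => // ?; apply: nPQ; [left|right].
have PF : ProperFilter (filter_from Gs (fun P => K `\` P)).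
  exact: filter_from_proper.
have FK : filter_from Gs (fun P => K `\` P) K.
  by exists set0; [split; [exact: open0|rewrite closure0] | move=> x []].
have [x [Kx clx]] := cK _ PF FK.
have nO : nbhs x O by apply: open_nbhs_nbhs; split => //; exact: KO.
have [P [oP [Px cP]]] := tg_regular nO.
have FP : filter_from Gs (fun P => K `\` P) (K `\` P).
  by exists P.
have nP : nbhs x P by apply: open_nbhs_nbhs.
have [w [[_ nw] Pw]] := clx _ _ FP nP.
exact: nw.
Qed.

Section Construction.
Variables (X : topologicalType) (H : TopGroup) (h : X -> tg_sort H).
Hypotheses (hc : continuous h) (hi : injective h).
Variables (L : nat -> set X) (U : set X).
Hypotheses (cL : forall n, compact (L n)) (oU : open U).

Definition Inv n (p : set (tg_sort H) * set (tg_sort H)) :=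
  open p.1 /\ open p.2 /\ closure p.1 `<=` p.2 /\
  (forall g, L n g -> closure p.2 (h g) -> U g).

Lemma bad_closed n : closed (h @` (L n `\` U)).
Proof.
apply: compact_closed; first exact: tg_hausdorff.
apply: continuous_compact; first by move=> z; apply: continuous_subspaceT.
by apply: compact_closedI => //; apply: open_closedC.
Qed.

Lemma step n p : Inv n p -> exists p', Inv n.+1 p' /\
  (forall g, L n g -> closure p.1 (h g) -> p'.1 (h g)) /\ p'.2 `<=` p.2.
Proof.
case: p => A B [/= oA [oB [cAB gU]]].
pose D := L n `&` h @^-1` closure A.
have cD : compact D.
  apply: compact_closedI => //; apply: preimage_closed; last exact: closed_closure.
  by move=> z _; apply: hc.
have chD : compact (h @` D).
  by apply: continuous_compact => //; move=> z; apply: continuous_subspaceT.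
pose O1 := B `&` ~` (h @` (L n.+1 `\` U)).
have oO1 : open O1 by apply: openI => //; apply: closed_openC; apply: bad_closed.
have DO1 : h @` D `<=` O1.
  move=> _ [g [Lg cAg] <-]; split; first exact: cAB.
  move=> [g' [_ nUg'] hg]; apply: nUg'; rewrite (hi hg).
  by apply: gU => //; apply: subset_closure; apply: cAB.
have [B' [oB' [DB' cB']]] := tg_compact_sep chD oO1 DO1.
have [A' [oA' [DA' cA']]] := tg_compact_sep chD oB' DB'.
exists (A', B'); split; last split.
- split => //; split => //; split => // g Lg /cB' [_ nC].
  apply: contrapT => nUg; apply: nC; by exists g.
- by move=> g Lg cAg; apply: DA'; exists g.
- by move=> y /subset_closure /cB' [].
Qed.

Lemma base x : U x -> exists p, Inv 0 p /\ p.1 (h x).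
Proof.
move=> Ux.
pose O1 := ~` (h @` (L 0 `\` U)).
have oO1 : open O1 by apply: closed_openC; apply: bad_closed.
have xO1 : [set h x] `<=` O1.
  by move=> _ -> [g [_ nUg] /hi hg]; apply: nUg; rewrite hg.
have c1 : compact [set h x] by exact: compact_set1.
have [B' [oB' [DB' cB']]] := tg_compact_sep c1 oO1 xO1.
have [A' [oA' [DA' cA']]] := tg_compact_sep c1 oB' DB'.
exists (A', B'); split; last by apply: DA'.
split => //; split => //; split => // g Lg /cB' nC.
apply: contrapT => nUg; apply: nC; by exists g.
Qed.

End Construction.


Lemma mono_sets (T : Type) (P : nat -> set T) :
  (forall n, P n `<=` P n.+1) -> forall n k, (n <= k)%N -> P n `<=` P k.
Proof.
move=> hP n k /subnK <-; elim: (k - n)%N => [|d IH] //= y /IH.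
by rewrite addSn; apply: hP.
Qed.

Lemma kw_regular (X : topologicalType) (H : TopGroup) (h : X -> tg_sort H) :
  k_omega_space X -> continuous h -> injective h -> regular_map h.
Proof.
move=> [K [cK [covK topK]]] hc hi; split => // x U0 nU0.
pose U := U0°.
have oU : open U by exact: open_interior.
have Ux : U x by apply: nbhs_singleton; apply: nbhs_interior.
pose L := fix L n := match n with 0 => [set x] `|` K 0 | n'.+1 => L n' `|` K n'.+1 end.
have cL : forall n, compact (L n).
  by elim => [|n IH] /=; apply: compactU => //; exact: compact_set1.
have LS : forall n, L n `<=` L n.+1 by move=> n g Lg; left.
have KL : forall n, K n `<=` L n by case => [|n] g Kg; right.
have [f hf] : exists f : nat * (set (tg_sort H) * set (tg_sort H)) -> set (tg_sort H) * set (tg_sort H),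
   forall np, Inv h L U np.1 np.2 -> Inv h L U np.1.+1 (f np) /\
     (forall g, L np.1 g -> closure np.2.1 (h g) -> (f np).1 (h g)) /\ (f np).2 `<=` np.2.2.
  suff ex : forall np : nat * (set (tg_sort H) * set (tg_sort H)), exists p' : set (tg_sort H) * set (tg_sort H), Inv h L U np.1 np.2 -> Inv h L U np.1.+1 p' /\
     (forall g, L np.1 g -> closure np.2.1 (h g) -> p'.1 (h g)) /\ p'.2 `<=` np.2.2.
    by have [f0 hf0] := choice ex; exists f0.
  move=> [n p] /=.
  have [I|nI] := pselect (Inv h L U n p).
    by have [p' ?] := step hc hi cL oU I; exists p'.
  by exists (set0, set0).
have [p0 [I0 x0]] := base hc hi cL oU Ux.
pose sq := fix sq n := match n with 0 => p0 | n'.+1 => f (n', sq n') end.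
have Isq : forall n, Inv h L U n (sq n).
  by elim => [|n IH] //=; have [] := hf (n, sq n) IH.
pose A n := (sq n).1; pose B n := (sq n).2.
have RA : forall n g, L n g -> closure (A n) (h g) -> A n.+1 (h g).
  by move=> n; have [_ []] := hf (n, sq n) (Isq n).
have BS : forall n, B n.+1 `<=` B n.
  by move=> n; have [_ []] := hf (n, sq n) (Isq n).
have AB : forall n, A n `<=` B n.
  move=> n y Ay; have [_ [_ [cAB _]]] := Isq n; apply: cAB; exact: subset_closure.
pose Q n := L n `&` h @^-1` A n.
have QS : forall n, Q n `<=` Q n.+1.
  move=> n g [Lg Ag]; split; first exact: LS.
  by apply: RA => //; apply: subset_closure.
have Qm := mono_sets QS.
have Bm : forall n k, (n <= k)%N -> B k `<=` B n.
  move=> n k /subnK <-; elim: (k - n)%N => [|d IH] //= y.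
  by rewrite addSn => /BS /IH.
pose F := \bigcap_n closure (B n).
exists F; split.
  by apply: closed_bigI => n _; exact: closed_closure.
split.
  apply: preimage_closed; first by move=> z _; apply: hc.
  by apply: closed_bigI => n _; exact: closed_closure.
split; last first.
  move=> g Fg; apply: interior_subset.
  have [m _ Kg] : (\bigcup_n K n) g by rewrite covK.
  have [_ [_ [_ hU]]] := Isq m.
  by apply: hU; [exact: KL | exact: Fg].
pose W := \bigcup_n Q n.
have oW : open W.
  apply/topK => m.
  exists (h @^-1` (\bigcup_(n in [set n | (m <= n)%N]) A n)); split.
    apply: open_comp; first by move=> z _; apply: hc.
    by apply: bigcup_open => n _; have [] := Isq n.
  apply/seteqP; split => g [Wg Kg]; split => //.
    case: Wg => n _ Qg.
    have := Qm n (maxn n m) (leq_maxl _ _) g Qg; case => _ Ag.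
    by exists (maxn n m) => //; exact: leq_maxr.
  case: Wg => n mn Ag; exists n => //; split => //.
  by apply: (mono_sets LS mn); exact: KL.
apply: (@filterS _ _ _ W).
  move=> g [n _ Qg] k _.
  have [_ Ag] := Qm n (maxn n k) (leq_maxl _ _) g Qg.
  apply: subset_closure; apply: (Bm k (maxn n k) (leq_maxr _ _)).
  exact: AB.
apply: open_nbhs_nbhs; split => //.
by exists 0%N => //; split => //=; left.
Qed.

Theorem corollary1 (C : TopGroupClass) (G : ParaTopGroup) :
  k_omega_space (ptg_sort G) -> (separated_by C G <-> regular_by C G).
Proof.
move=> kw; split.
  move=> [H [CH [h [hom [hc bij]]]]]; exists H; split => //; exists h.
  split => //; split; first exact: kw_regular kw hc (bij_inj bij).
  by case: bij => g _ gK y; exists (g y).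
move=> [H [CH [h [hom [[hc rh] surj]]]]]; exists H; split => //; exists h.
split => //; split => //.
have hi : injective h.
  move=> x y hxy; apply: (@ptg_hausdorff G) => A B nA nB.
  have [F [_ [_ [nF FA]]]] := rh x A nA.
  exists y; split; last exact: nbhs_singleton.
  apply: FA; rewrite /preimage /= -hxy.
  exact: (nbhs_singleton nF).
have [g hg] := choice surj.
by exists g => // x; apply: hi; rewrite hg.
Qed.
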